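(* Let $a>0$, $\eta\in(0,1)$ and $f\in\mathcal C_a$, and define $f^{\pm\eta}(s)=(1\pm\frac\eta2)f\big(s/(1\pm\frac\eta2)\big)$. Then: (1) $f^{\pm\eta}\in\mathcal C_{(2\pm\eta)a/2}$; (2) $(f^{\pm\eta})'(s)=f'\big(s/(1\pm\frac\eta2)\big)$ for all $s\in\mathbb R$; (3) $f^{+\eta}-f$ and $f-f^{-\eta}$ are decreasing on $\mathbb R_{\ge0}$; (4) $f^{-\eta}(s)\le f(s)\le f^{+\eta}(s)$ for all $s\in\mathbb R$, with $f^{-\eta}(s)=f(s)$ if and only if $|s|\ge a$, and $f^{+\eta}(s)=f(s)$ if and only if $|s|\ge(2+\eta)a/2$; (5) $\|f-f^{\pm\eta}\|_\infty=\frac\eta2f(0)$.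
   Context: For $b>0$, $\mathcal C_b$ is the set of $C^1$ functions $f:\mathbb R\to\mathbb R$ that are even, satisfy $f(s)=|s|$ for $|s|\ge b$ and are strictly convex on $[-b,b]$. Statements with $\pm$ hold for both signs. *)

(* Defs.v *)
From Stdlib Require Import Reals.
From Coquelicot Require Import Coquelicot.
Open Scope R_scope.

Definition C1 (f : R -> R) : Prop :=
  forall x, ex_derive f x /\ continuous (Derive f) x.

Definition even_fun (f : R -> R) : Prop := forall s, f (- s) = f s.

Definition strictly_convex_on (a b : R) (f : R -> R) : Prop :=
  forall x y t, a <= x <= b -> a <= y <= b -> x <> y -> 0 < t < 1 ->
    f (t * x + (1 - t) * y) < t * f x + (1 - t) * f y.

Definition classC (b : R) (f : R -> R) : Prop :=
  C1 f /\ even_fun f /\ (forall s, b <= Rabs s -> f s = Rabs s)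
  /\ strictly_convex_on (- b) b f.

Definition fpm (sigma eta : R) (f : R -> R) (s : R) : R :=
  (1 + sigma * eta / 2) * f (s / (1 + sigma * eta / 2)).

Definition decreasing_on_nonneg (g : R -> R) : Prop :=
  forall x y, 0 <= x -> x <= y -> g y <= g x.

Definition sup_norm_eq (g : R -> R) (m : R) : Prop :=
  is_lub (fun y => exists s, y = Rabs (g s)) m.

(* Main.v *)
Require Import Defs.
From Stdlib Require Import Reals Lra.
From Coquelicot Require Import Coquelicot.
Open Scope R_scope.

Lemma deriv_small f x d : is_derive f x d -> forall eps, 0 < eps ->
  exists delta, 0 < delta /\ forall h, h <> 0 -> Rabs h < delta ->
    Rabs (f (x + h) - f x - d * h) <= eps * Rabs h.
Proof.
  intros Hd eps He. apply is_derive_Reals in Hd.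
  destruct (Hd eps He) as [delta Hdel].
  exists delta; split; [apply cond_pos|].
  intros h Hh Hlt. specialize (Hdel h Hh Hlt).
  replace (f (x + h) - f x - d * h) with (h * ((f (x + h) - f x) / h - d))
    by (field; auto).
  rewrite Rabs_mult. rewrite (Rmult_comm eps).
  apply Rmult_le_compat_l; [apply Rabs_pos| lra].
Qed.

Lemma deriv_right f x d k : is_derive f x d ->
  (forall h, 0 < h -> f (x + h) = f x + k * h) -> d = k.
Proof.
  intros Hd Hl. destruct (Req_dec d k) as [E|N]; auto. exfalso.
  assert (He : 0 < Rabs (d - k) / 2) by (apply Rdiv_lt_0_compat; [apply Rabs_pos_lt; lra| lra]).
  destruct (deriv_small f x d Hd _ He) as [delta [Hdp Hdel]].
  assert (H1 : delta / 2 <> 0) by lra.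
  assert (H2 : Rabs (delta/2) < delta) by (rewrite Rabs_pos_eq; lra).
  specialize (Hdel _ H1 H2). rewrite Hl in Hdel by lra.
  replace (f x + k * (delta / 2) - f x - d * (delta / 2)) with (- ((d - k) * (delta/2))) in Hdel by ring.
  rewrite Rabs_Ropp, Rabs_mult in Hdel.
  rewrite (Rabs_pos_eq (delta/2)) in Hdel by lra.
  assert (0 < Rabs (d-k)) by (apply Rabs_pos_lt; lra). nra.
Qed.

Lemma deriv_left f x d k : is_derive f x d ->
  (forall h, h < 0 -> f (x + h) = f x + k * h) -> d = k.
Proof.
  intros Hd Hl. destruct (Req_dec d k) as [E|N]; auto. exfalso.
  assert (He : 0 < Rabs (d - k) / 2) by (apply Rdiv_lt_0_compat; [apply Rabs_pos_lt; lra| lra]).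
  destruct (deriv_small f x d Hd _ He) as [delta [Hdp Hdel]].
  assert (H1 : - (delta / 2) <> 0) by lra.
  assert (H2 : Rabs (- (delta/2)) < delta) by (rewrite Rabs_Ropp, Rabs_pos_eq; lra).
  specialize (Hdel _ H1 H2). rewrite Hl in Hdel by lra.
  replace (f x + k * - (delta / 2) - f x - d * - (delta / 2)) with (((d - k) * (delta/2))) in Hdel by ring.
  rewrite Rabs_Ropp, Rabs_mult in Hdel.
  rewrite (Rabs_pos_eq (delta/2)) in Hdel by lra.
  assert (0 < Rabs (d-k)) by (apply Rabs_pos_lt; lra). nra.
Qed.

Lemma tangent f p q x y d :
  (forall x y t, p <= x <= q -> p <= y <= q -> 0 < t < 1 ->
     f (t * x + (1 - t) * y) <= t * f x + (1 - t) * f y) ->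
  p <= x <= q -> p <= y <= q -> is_derive f x d -> f x + d * (y - x) <= f y.
Proof.
  intros Hc Hx Hy Hd.
  destruct (Req_dec y x) as [E|N]. { subst; lra. }
  destruct (Rle_or_lt (f x + d * (y - x)) (f y)) as [L|L]; auto. exfalso.
  set (d0 := f x + d * (y - x) - f y).
  assert (Hd0 : 0 < d0) by (unfold d0; lra).
  assert (Hyx : 0 < Rabs (y - x)) by (apply Rabs_pos_lt; lra).
  assert (He : 0 < d0 / (2 * Rabs (y - x))) by (apply Rdiv_lt_0_compat; lra).
  destruct (deriv_small f x d Hd _ He) as [delta [Hdp Hdel]].
  set (t := Rmin (1/2) (delta / (2 * Rabs (y - x)))).
  assert (Ht1 : t <= 1/2) by apply Rmin_l.
  assert (Ht2 : t <= delta / (2 * Rabs (y - x))) by apply Rmin_r.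
  assert (Ht0 : 0 < t) by (apply Rmin_pos; [lra| apply Rdiv_lt_0_compat; lra]).
  set (h := t * (y - x)).
  assert (Hh : h <> 0) by (unfold h; intro Z; apply Rmult_integral in Z; lra).
  assert (Hah : Rabs h = t * Rabs (y - x)) by (unfold h; rewrite Rabs_mult, Rabs_pos_eq; lra).
  assert (Hhd : Rabs h < delta).
  { rewrite Hah. apply Rle_lt_trans with (delta / (2 * Rabs (y - x)) * Rabs (y - x)).
    apply Rmult_le_compat_r; lra.
    replace (delta / (2 * Rabs (y - x)) * Rabs (y - x)) with (delta/2) by (field; lra). lra. }
  specialize (Hdel h Hh Hhd).
  specialize (Hc y x t Hy Hx ltac:(lra)).
  replace (t * y + (1 - t) * x) with (x + h) in Hc by (unfold h; ring).
  assert (Hineq : f (x + h) - f x - d * h <= - (t * d0)) by (unfold d0, h in *; nra).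
  assert (Hb : Rabs (f (x + h) - f x - d * h) >= t * d0).
  { rewrite Rabs_left1 by nra. lra. }
  rewrite Hah in Hdel.
  replace (d0 / (2 * Rabs (y - x)) * (t * Rabs (y - x))) with (t * d0 / 2) in Hdel by (field; lra).
  nra.
Qed.

Lemma dcorr a f x : classC a f -> is_derive f x (Derive f x).
Proof. intros [HC _]. apply Derive_correct, (proj1 (HC x)). Qed.

Lemma fout a f s : classC a f -> a <= Rabs s -> f s = Rabs s.
Proof. intros [_ [_ [H _]]]; auto. Qed.

Lemma wconv a f : classC a f -> forall x y t, -a <= x <= a -> -a <= y <= a -> 0 < t < 1 ->
  f (t * x + (1 - t) * y) <= t * f x + (1 - t) * f y.
Proof.
  intros Hf x y t Hx Hy Ht. destruct (Req_dec x y) as [E|N].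
  - subst. replace (t * y + (1 - t) * y) with y by ring. lra.
  - destruct Hf as [_ [_ [_ Hc]]]. left; apply Hc; auto.
Qed.

Lemma Df_a a f : 0 < a -> classC a f -> Derive f a = 1.
Proof.
  intros Ha Hf. apply (deriv_right f a); [apply (dcorr a f a Hf)|].
  intros h Hh. rewrite (fout a f (a+h) Hf), (fout a f a Hf) by (rewrite Rabs_pos_eq; lra).
  rewrite !Rabs_pos_eq by lra. lra.
Qed.

Lemma Df_ma a f : 0 < a -> classC a f -> Derive f (-a) = -1.
Proof.
  intros Ha Hf. apply (deriv_left f (-a)); [apply (dcorr a f _ Hf)|].
  intros h Hh. rewrite (fout a f (-a+h) Hf), (fout a f (-a) Hf) by (rewrite Rabs_left; lra).
  rewrite !Rabs_left by lra. lra.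
Qed.

Lemma Df_gt a f y : 0 < a -> classC a f -> a < y -> Derive f y = 1.
Proof.
  intros Ha Hf Hy. apply (deriv_right f y); [apply (dcorr a f y Hf)|].
  intros h Hh. rewrite (fout a f (y+h) Hf), (fout a f y Hf) by (rewrite Rabs_pos_eq; lra).
  rewrite !Rabs_pos_eq by lra. lra.
Qed.

Lemma Df_lt a f y : 0 < a -> classC a f -> y < -a -> Derive f y = -1.
Proof.
  intros Ha Hf Hy. apply (deriv_left f y); [apply (dcorr a f _ Hf)|].
  intros h Hh. rewrite (fout a f (y+h) Hf), (fout a f y Hf) by (rewrite Rabs_left; lra).
  rewrite !Rabs_left by lra. lra.
Qed.

Lemma tang a f x y : classC a f -> -a <= x <= a -> -a <= y <= a ->
  f y + Derive f y * (x - y) <= f x.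
Proof.
  intros Hf Hx Hy. apply (tangent f (-a) a); auto.
  apply (wconv a f Hf). apply (dcorr a f y Hf).
Qed.

Lemma f_ge_abs a f x : 0 < a -> classC a f -> Rabs x <= f x.
Proof.
  intros Ha Hf. destruct (Rle_or_lt a (Rabs x)) as [L|L].
  - rewrite (fout a f x Hf L); lra.
  - assert (Hx : -a <= x <= a) by (unfold Rabs in L; destruct Rcase_abs in L; lra).
    pose proof (tang a f x a Hf Hx ltac:(lra)) as T1.
    pose proof (tang a f x (-a) Hf Hx ltac:(lra)) as T2.
    rewrite Df_a, (fout a f a Hf) in T1 by (auto; rewrite Rabs_pos_eq; lra).
    rewrite Df_ma, (fout a f (-a) Hf) in T2 by (auto; rewrite Rabs_left; lra).
    rewrite Rabs_pos_eq in T1 by lra. rewrite Rabs_left in T2 by lra.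
    unfold Rabs; destruct Rcase_abs; lra.
Qed.

Lemma Dbound a f y : 0 < a -> classC a f -> -1 <= Derive f y <= 1.
Proof.
  intros Ha Hf.
  destruct (Rlt_or_le a y) as [L|L]. { rewrite (Df_gt a f y); auto; lra. }
  destruct (Rlt_or_le y (-a)) as [L2|L2]. { rewrite (Df_lt a f y); auto; lra. }
  pose proof (tang a f a y Hf ltac:(lra) ltac:(lra)) as T1.
  pose proof (tang a f (-a) y Hf ltac:(lra) ltac:(lra)) as T2.
  rewrite (fout a f a Hf) in T1 by (auto; rewrite Rabs_pos_eq; lra).
  rewrite (fout a f (-a) Hf) in T2 by (auto; rewrite Rabs_left; lra).
  rewrite Rabs_pos_eq in T1 by lra. rewrite Rabs_left in T2 by lra.
  pose proof (f_ge_abs a f y Ha Hf) as G.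
  assert (G1 : y <= f y) by (unfold Rabs in G; destruct Rcase_abs in G; lra).
  assert (G2 : -y <= f y) by (unfold Rabs in G; destruct Rcase_abs in G; lra).
  split.
  - destruct (Req_dec y (-a)) as [E|N]. { subst; rewrite Df_ma; auto; lra. }
    nra.
  - destruct (Req_dec y a) as [E|N]. { subst; rewrite Df_a; auto; lra. }
    nra.
Qed.

Lemma SG a f x y : 0 < a -> classC a f -> f y + Derive f y * (x - y) <= f x.
Proof.
  intros Ha Hf.
  pose proof (f_ge_abs a f x Ha Hf) as Gx.
  assert (G1 : x <= f x) by (unfold Rabs in Gx; destruct Rcase_abs in Gx; lra).
  assert (G2 : -x <= f x) by (unfold Rabs in Gx; destruct Rcase_abs in Gx; lra).
  destruct (Rlt_or_le a y) as [L|L].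
  { rewrite (Df_gt a f y), (fout a f y Hf) by (auto; rewrite Rabs_pos_eq; lra).
    rewrite Rabs_pos_eq by lra. lra. }
  destruct (Rlt_or_le y (-a)) as [L2|L2].
  { rewrite (Df_lt a f y), (fout a f y Hf) by (auto; rewrite Rabs_left; lra).
    rewrite Rabs_left by lra. lra. }
  pose proof (Dbound a f y Ha Hf) as DB.
  destruct (Rlt_or_le a x) as [M|M].
  { pose proof (tang a f a y Hf ltac:(lra) ltac:(lra)) as T1.
    rewrite (fout a f a Hf) in T1 by (auto; rewrite Rabs_pos_eq; lra).
    rewrite (fout a f x Hf) by (auto; rewrite Rabs_pos_eq; lra).
    rewrite Rabs_pos_eq in * by lra. nra. }
  destruct (Rlt_or_le x (-a)) as [M2|M2].
  { pose proof (tang a f (-a) y Hf ltac:(lra) ltac:(lra)) as T1.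
    rewrite (fout a f (-a) Hf) in T1 by (auto; rewrite Rabs_left; lra).
    rewrite (fout a f x Hf) by (auto; rewrite Rabs_left; lra).
    rewrite Rabs_left in * by lra. nra. }
  apply (tang a f x y Hf); lra.
Qed.

Lemma SSG a f x y : 0 < a -> classC a f -> -a <= x <= a -> -a <= y <= a -> x <> y ->
  f y + Derive f y * (x - y) < f x.
Proof.
  intros Ha Hf Hx Hy N.
  pose proof Hf as [_ [_ [_ Hc]]].
  specialize (Hc x y (1/2) Hx Hy N ltac:(lra)).
  pose proof (tang a f ((1/2) * x + (1 - 1/2) * y) y Hf ltac:(lra) Hy). nra.
Qed.

Lemma f_gt_abs a f x : 0 < a -> classC a f -> Rabs x < a -> Rabs x < f x.
Proof.
  intros Ha Hf L.
  assert (Hx : -a <= x <= a) by (unfold Rabs in L; destruct Rcase_abs in L; lra).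
  assert (Hx' : -a < x < a) by (unfold Rabs in L; destruct Rcase_abs in L; lra).
  pose proof (SSG a f x a Ha Hf Hx ltac:(lra) ltac:(lra)) as T1.
  pose proof (SSG a f x (-a) Ha Hf Hx ltac:(lra) ltac:(lra)) as T2.
  rewrite Df_a, (fout a f a Hf) in T1 by (auto; rewrite Rabs_pos_eq; lra).
  rewrite Df_ma, (fout a f (-a) Hf) in T2 by (auto; rewrite Rabs_left; lra).
  rewrite Rabs_pos_eq in T1 by lra. rewrite Rabs_left in T2 by lra.
  unfold Rabs; destruct Rcase_abs; lra.
Qed.

Lemma Dmono a f x y : 0 < a -> classC a f -> x <= y -> Derive f x <= Derive f y.
Proof.
  intros Ha Hf L. destruct (Req_dec x y) as [E|N]. { subst; lra. }
  pose proof (SG a f x y Ha Hf). pose proof (SG a f y x Ha Hf). nra.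
Qed.

Lemma h_nonneg a f x : 0 < a -> classC a f -> x * Derive f x <= f x.
Proof.
  intros Ha Hf. pose proof (Dbound a f x Ha Hf). pose proof (f_ge_abs a f x Ha Hf).
  unfold Rabs in *; destruct Rcase_abs; nra.
Qed.

Lemma g_deriv c a f s : 0 < c -> classC a f ->
  is_derive (fun s => c * f (s / c)) s (Derive f (s / c)).
Proof.
  intros Hc Hf.
  assert (H1 : is_derive (fun s => s / c) s (/ c)).
  { auto_derive; [auto| field; lra]. }
  pose proof (is_derive_comp f (fun s => s / c) s _ _ (dcorr a f (s/c) Hf) H1) as H2.
  pose proof (is_derive_scal _ _ c _ H2) as H3.
  replace (Derive f (s / c)) with (c * scal (/ c) (Derive f (s / c))); auto.
  unfold scal; simpl; unfold mult; simpl. field; lra.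
Qed.

Lemma Rabs_divc s c : 0 < c -> Rabs (s / c) = Rabs s / c.
Proof.
  intros Hc. unfold Rdiv. rewrite Rabs_mult, (Rabs_pos_eq (/c)); auto.
  left; apply Rinv_0_lt_compat; lra.
Qed.

Lemma g_classC c a f : 0 < a -> 0 < c -> classC a f -> classC (c * a) (fun s => c * f (s / c)).
Proof.
  intros Ha Hc Hf. pose proof Hf as [HC [He [Ho Hcv]]].
  split; [|split; [|split]].
  - intros x. split. { eexists; apply (g_deriv c a f x Hc Hf). }
    apply continuous_ext with (fun s => Derive f (s / c)).
    { intros t. symmetry; apply is_derive_unique, (g_deriv c a f t Hc Hf). }
    apply (continuous_comp (fun s => s / c) (Derive f)).
    + apply (@ex_derive_continuous R_AbsRing R_NormedModule (fun s => s / c)). eexists. auto_derive; [auto| reflexivity].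
    + apply HC.
  - intros s. simpl. replace (- s / c) with (- (s / c)) by (field; lra). rewrite He; auto.
  - intros s Hs. rewrite Ho. rewrite Rabs_divc by lra. field; lra.
    rewrite Rabs_divc by lra. apply Rmult_le_reg_r with c; auto.
    replace (Rabs s / c * c) with (Rabs s) by (field; lra). lra.
  - intros x y t Hx Hy Nxy Ht.
    replace ((t * x + (1 - t) * y) / c) with (t * (x / c) + (1 - t) * (y / c)) by (field; lra).
    assert (Ex : c * (x / c) = x) by (field; lra).
    assert (Ey : c * (y / c) = y) by (field; lra).
    assert (Hx' : - a <= x / c <= a) by nra.
    assert (Hy' : - a <= y / c <= a) by nra.
    assert (N : x / c <> y / c) by (intro Z; apply Nxy; rewrite <- Ex, <- Ey, Z; auto).
    specialize (Hcv _ _ t Hx' Hy' N Ht). nra.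
Qed.

Lemma decr_of_deriv (D df : R -> R) : (forall u, is_derive D u (df u)) ->
  (forall u, 0 <= u -> df u <= 0) -> decreasing_on_nonneg D.
Proof.
  intros Hd Hneg x y Hx Hxy.
  destruct (Req_dec x y) as [E|N]. { subst; lra. }
  destruct (MVT_gen D x y df) as [z [Hz Eq]].
  - intros; auto.
  - intros z _. apply continuity_pt_filterlim. apply (@ex_derive_continuous R_AbsRing R_NormedModule D).
    eexists; apply Hd.
  - rewrite Rmin_left in Hz by lra. rewrite Rmax_right in Hz by lra.
    specialize (Hneg z ltac:(lra)). nra.
Qed.

Lemma minus_deriv (F G : R -> R) x dF dG : is_derive F x dF -> is_derive G x dG ->
  is_derive (fun t => F t - G t) x (dF - dG).
Proof.
  intros H1 H2. exact (is_derive_minus F G x dF dG H1 H2).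
Qed.

Lemma f0pos a f : 0 < a -> classC a f -> 0 < f 0.
Proof. intros Ha Hf. pose proof (f_gt_abs a f 0 Ha Hf). rewrite Rabs_R0 in H. apply H; lra. Qed.

Lemma absin a x : Rabs x <= a -> -a <= x <= a.
Proof. unfold Rabs; destruct Rcase_abs; lra. Qed.

Lemma neq_cu c u : c <> 1 -> u <> 0 -> u <> c * u.
Proof. intros H1 H2 Z. assert (E : (c - 1) * u = 0) by lra.
  apply Rmult_integral in E; destruct E; lra. Qed.
Lemma neq_cu' c u : c <> 1 -> u <> 0 -> c * u <> u.
Proof. intros H1 H2 Z. apply (neq_cu c u); auto. Qed.

Lemma up_le a f c u : 0 < a -> classC a f -> 1 < c -> f (c * u) <= c * f u.
Proof.
  intros Ha Hf Hc. pose proof (SG a f u (c*u) Ha Hf). pose proof (h_nonneg a f (c*u) Ha Hf). nra.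
Qed.

Lemma up_lt a f c u : 0 < a -> classC a f -> 1 < c -> Rabs u < a -> f (c * u) < c * f u.
Proof.
  intros Ha Hf Hc Hu. pose proof (f0pos a f Ha Hf).
  destruct (Req_dec u 0) as [E|N]. { subst. rewrite Rmult_0_r. nra. }
  destruct (Rle_or_lt (Rabs (c*u)) a) as [L|L].
  - pose proof (SSG a f u (c*u) Ha Hf (absin a u ltac:(lra)) (absin a _ L)
      (neq_cu c u ltac:(lra) N)).
    pose proof (h_nonneg a f (c*u) Ha Hf).
    set (d := Derive f (c*u)) in *.
    assert (0 < c * (f u - (f (c*u) + d * (u - c*u)))) by (apply Rmult_lt_0_compat; lra).
    assert (0 <= (c - 1) * (f (c*u) - c * u * d)) by (apply Rmult_le_pos; lra).
    nra.
  - rewrite (fout a f _ Hf) by lra. pose proof (f_gt_abs a f u Ha Hf Hu).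
    rewrite Rabs_mult, (Rabs_pos_eq c) by lra. nra.
Qed.

Lemma up_bound a f c u : 0 < a -> classC a f -> 1 < c -> c * f u - f (c * u) <= (c - 1) * f 0.
Proof.
  intros Ha Hf Hc. pose proof (SG a f (c*u) u Ha Hf). pose proof (SG a f 0 u Ha Hf). nra.
Qed.

Lemma dn_le a f c u : 0 < a -> classC a f -> 0 < c < 1 -> c * f u <= f (c * u).
Proof.
  intros Ha Hf Hc. pose proof (SG a f (c*u) u Ha Hf). pose proof (h_nonneg a f u Ha Hf). nra.
Qed.

Lemma dn_lt a f c u : 0 < a -> classC a f -> 0 < c < 1 -> Rabs (c * u) < a -> c * f u < f (c * u).
Proof.
  intros Ha Hf Hc Hu. pose proof (f0pos a f Ha Hf).
  destruct (Req_dec u 0) as [E|N]. { subst. rewrite Rmult_0_r. nra. }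
  destruct (Rle_or_lt (Rabs u) a) as [L|L].
  - pose proof (SSG a f (c*u) u Ha Hf (absin a (c*u) ltac:(lra)) (absin a _ L)
      (neq_cu' c u ltac:(lra) N)).
    pose proof (h_nonneg a f u Ha Hf).
    set (d := Derive f u) in *.
    assert (0 <= (1 - c) * (f u - u * d)) by (apply Rmult_le_pos; lra).
    nra.
  - rewrite (fout a f u Hf) by lra. pose proof (f_gt_abs a f (c*u) Ha Hf Hu).
    rewrite Rabs_mult, (Rabs_pos_eq c) in * by lra. nra.
Qed.

Lemma dn_bound a f c u : 0 < a -> classC a f -> 0 < c < 1 -> f (c * u) - c * f u <= (1 - c) * f 0.
Proof.
  intros Ha Hf Hc. pose proof (SG a f u (c*u) Ha Hf). pose proof (SG a f 0 (c*u) Ha Hf). nra.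
Qed.

Lemma sup_up a f c m : 0 < a -> classC a f -> 1 < c -> m = c - 1 ->
  sup_norm_eq (fun s => f s - c * f (s / c)) (m * f 0).
Proof.
  intros Ha Hf Hc ->. split.
  - intros y [s ->].
    set (u := s / c). assert (Es : s = c * u) by (unfold u; field; lra).
    clearbody u. subst s.
    pose proof (up_le a f c u Ha Hf Hc). pose proof (up_bound a f c u Ha Hf Hc).
    rewrite Rabs_left1 by lra. lra.
  - intros b Hb. apply Hb. exists 0. replace (0 / c) with 0 by (field; lra).
    pose proof (f0pos a f Ha Hf).
    rewrite Rabs_left1 by nra. lra.
Qed.

Lemma sup_dn a f c m : 0 < a -> classC a f -> 0 < c < 1 -> m = 1 - c ->
  sup_norm_eq (fun s => f s - c * f (s / c)) (m * f 0).
Proof.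
  intros Ha Hf Hc ->. split.
  - intros y [s ->].
    set (u := s / c). assert (Es : s = c * u) by (unfold u; field; lra).
    clearbody u. subst s.
    pose proof (dn_le a f c u Ha Hf Hc). pose proof (dn_bound a f c u Ha Hf Hc).
    rewrite Rabs_pos_eq by lra. lra.
  - intros b Hb. apply Hb. exists 0. replace (0 / c) with 0 by (field; lra).
    pose proof (f0pos a f Ha Hf).
    rewrite Rabs_pos_eq by nra. lra.
Qed.

Lemma part125 a eta f sigma : 0 < a -> 0 < eta < 1 -> classC a f ->
  sigma = 1 \/ sigma = -1 ->
     classC ((2 + sigma * eta) * a / 2) (fpm sigma eta f)
     /\ (forall s, is_derive (fpm sigma eta f) s
                     (Derive f (s / (1 + sigma * eta / 2))))
     /\ sup_norm_eq (fun s => f s - fpm sigma eta f s) (eta / 2 * f 0).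
Proof.
  intros Ha He Hf Hs.
  assert (Hc : 0 < 1 + sigma * eta / 2) by (destruct Hs; subst; lra).
  unfold fpm. split; [|split].
  - replace ((2 + sigma * eta) * a / 2) with ((1 + sigma * eta / 2) * a) by field.
    apply g_classC; auto.
  - intros s. apply (g_deriv _ a f s Hc Hf).
  - destruct Hs; subst.
    + apply (sup_up a); auto; lra.
    + apply (sup_dn a); auto; lra.
Qed.

Lemma lemma3p4 (a eta : R) (f : R -> R) :
  0 < a -> 0 < eta < 1 -> classC a f ->
  (forall sigma, sigma = 1 \/ sigma = -1 ->
     (* (1) *)
     classC ((2 + sigma * eta) * a / 2) (fpm sigma eta f)
     (* (2) *)
     /\ (forall s, is_derive (fpm sigma eta f) s
                     (Derive f (s / (1 + sigma * eta / 2))))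
     (* (5) *)
     /\ sup_norm_eq (fun s => f s - fpm sigma eta f s) (eta / 2 * f 0))
  (* (3) *)
  /\ decreasing_on_nonneg (fun s => fpm 1 eta f s - f s)
  /\ decreasing_on_nonneg (fun s => f s - fpm (-1) eta f s)
  (* (4) *)
  /\ (forall s, fpm (-1) eta f s <= f s /\ f s <= fpm 1 eta f s)
  /\ (forall s, fpm (-1) eta f s = f s <-> a <= Rabs s)
  /\ (forall s, fpm 1 eta f s = f s <-> (2 + eta) * a / 2 <= Rabs s).
Proof.
  intros Ha He Hf.
  split. { intros sigma Hs. apply part125; auto. }
  unfold fpm.
  set (cp := 1 + 1 * eta / 2). set (cm := 1 + -1 * eta / 2).
  assert (Hcp : 1 < cp) by (unfold cp; lra).
  assert (Hcm : 0 < cm < 1) by (unfold cm; lra).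
  split; [|split; [|split; [|split]]].
  - apply decr_of_deriv with (df := fun u => Derive f (u / cp) - Derive f u).
    + intros u. apply minus_deriv; [apply (g_deriv cp a f u ltac:(lra) Hf)| apply (dcorr a f u Hf)].
    + intros u Hu. assert (E : cp * (u / cp) = u) by (field; lra).
      assert (V : 0 <= u / cp) by (apply Rdiv_le_0_compat; lra).
      pose proof (Dmono a f (u / cp) u Ha Hf ltac:(nra)). lra.
  - apply decr_of_deriv with (df := fun u => Derive f u - Derive f (u / cm)).
    + intros u. apply minus_deriv; [apply (dcorr a f u Hf)| apply (g_deriv cm a f u ltac:(lra) Hf)].
    + intros u Hu. assert (E : cm * (u / cm) = u) by (field; lra).
      assert (V : 0 <= u / cm) by (apply Rdiv_le_0_compat; lra).
      pose proof (Dmono a f u (u / cm) Ha Hf ltac:(nra)). lra.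
  - intros s. split.
    + set (u := s / cm). assert (Es : s = cm * u) by (unfold u; field; lra).
      clearbody u. subst s. apply (dn_le a f cm u Ha Hf Hcm).
    + set (u := s / cp). assert (Es : s = cp * u) by (unfold u; field; lra).
      clearbody u. subst s. apply (up_le a f cp u Ha Hf Hcp).
  - intros s. set (u := s / cm). assert (Es : s = cm * u) by (unfold u; field; lra).
    clearbody u. subst s. split.
    + intros Eq. destruct (Rle_or_lt a (Rabs (cm * u))) as [L|L]; auto.
      pose proof (dn_lt a f cm u Ha Hf Hcm L). lra.
    + intros L. rewrite (fout a f _ Hf L).
      rewrite (fout a f u Hf).
      * rewrite Rabs_mult, (Rabs_pos_eq cm) by lra. lra.
      * rewrite Rabs_mult, (Rabs_pos_eq cm) in L by lra. nra.
  - intros s. set (u := s / cp). assert (Es : s = cp * u) by (unfold u; field; lra).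
    clearbody u. subst s.
    replace ((2 + eta) * a / 2) with (cp * a) by (unfold cp; field).
    rewrite Rabs_mult, (Rabs_pos_eq cp) by lra.
    split.
    + intros Eq. destruct (Rle_or_lt a (Rabs u)) as [L|L]; [nra|].
      pose proof (up_lt a f cp u Ha Hf Hcp L). lra.
    + intros L. assert (L' : a <= Rabs u) by nra.
      rewrite (fout a f _ Hf L'), (fout a f (cp * u) Hf).
      * rewrite Rabs_mult, (Rabs_pos_eq cp) by lra. lra.
      * rewrite Rabs_mult, (Rabs_pos_eq cp) by lra. nra.
Qed.
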